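(* Consider uniform sampling of $g$ from the global Clifford group $\mathrm{Cl}_n$ ($n\ge1$) with gate-dependent Pauli noise channels $\Lambda(g)$. Prepare $E_0=|0\cdots0\rangle\langle0\cdots0|$, apply $\omega(g)\Lambda(g)$, measure in the computational basis obtaining $x$ with probability $(E_x|\omega(g)\Lambda(g)|E_0)$, and compute $\hat f(g,x)=\frac{d\,(E_x|\omega(g)|E_0)-1}{d-1}$. Then $$\mathbb{E}_{g,x}[\hat f(g,x)]=\frac1{d+1}\cdot\frac1{d-1}\sum_{a\in\mathsf D\setminus\{0\}}\bar\lambda_a ,$$ i.e. $\frac1{d+1}$ times the average of $\bar\lambda_a$ over the $d-1$ nonzero labels $a$ of diagonal Pauli operators.
   Context: $d=2^n$; $(A|\mathcal X|B)=\mathrm{Tr}(A^\dagger\mathcal X(B))$; $\omega(g)(A)=gAg^\dagger$; $E_x=|x\rangle\langle x|$. Per-qubit Pauli labels $\sigma_{00}=\mathbb 1,\sigma_{01}=X,\sigma_{11}=Y,\sigma_{10}=Z$, $\sigma_a=\bigotimes_i\sigma_{a_i}$; $\mathsf D=\{00,10\}^n$ is the set of labels of diagonal Pauli operators. Pauli channel: $\Lambda(\rho)=\sum_bq_b\sigma_b\rho\sigma_b$ with $q$ a probability vector, eigenvalues $\Lambda(g)(\sigma_a)=\lambda_a(g)\sigma_a$. $Z_z=\bigotimes_iZ^{z_i}$; for $g\in\mathrm{Cl}_n$, $\Xi_z(g)$ is the Pauli $\sigma_b$ with $g^\dagger Z_zg=\pm\sigma_b$. With $p$ uniform on $\mathrm{Cl}_n$: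 $s_a=\sum_z\sum_{g:\Xi_z(g)=\sigma_a}p(g)$ and $\bar\lambda_a=s_a^{-1}\sum_z\sum_{g:\Xi_z(g)=\sigma_a}p(g)\lambda_a(g)$. *)

(* Defs.v *)
From HB Require Import structures.
From mathcomp Require Import all_boot all_order all_algebra.
Set Implicit Arguments. Unset Strict Implicit. Unset Printing Implicit Defensive.
Import Order.TTheory GRing.Theory Num.Theory Num.Syntax.
Local Open Scope ring_scope.

(* The computational basis index
   x : 'I_(2^n) encodes the bit string (bit x j)_j in binary. *)

Definition bit (n : nat) (x : 'I_(2 ^ n)) (j : 'I_n) : bool := odd (x %/ 2 ^ j).

Definition label (n : nat) := {ffun 'I_n -> bool * bool}.

(* single-qubit Pauli entries: 00 = 1, 01 = X, 11 = Y, 10 = Z *)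
Definition pauli1 {C : numClosedFieldType} (s : bool * bool) (r c : bool) : C :=
  match s with
  | (false, false) => (r == c)%:R
  | (false, true)  => (r != c)%:R
  | (true, false)  => if r == c then (if r then -1 else 1) else 0
  | (true, true)   => if r == c then 0 else (if r then 'i else - 'i)
  end.

Definition pauli {C : numClosedFieldType} {n : nat} (a : label n) : 'M[C]_(2 ^ n) :=
  \matrix_(x, y) \prod_(j < n) pauli1 (a j) (bit x j) (bit y j).

Definition label0 (n : nat) : label n := [ffun => (false, false)].
Definition diag_label {n : nat} (a : label n) : bool := [forall i, ~~ (a i).2].

Definition adj {C : numClosedFieldType} {m : nat} (A : 'M[C]_m) : 'M[C]_m :=
  (map_mx (fun z => z^*) A)^T.

(* (A|X|B) = Tr(A^dagger X(B)) *)
Definition hs {C : numClosedFieldType} {m : nat} (A : 'M[C]_m)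
  (X : 'M[C]_m -> 'M[C]_m) (B : 'M[C]_m) : C := \tr (adj A *m X B).

Definition omega {C : numClosedFieldType} {m : nat} (g A : 'M[C]_m) : 'M[C]_m :=
  g *m A *m adj g.

Lemma pow2_gt0 (n : nat) : (0 < 2 ^ n)%N.
Proof. by rewrite expn_gt0. Qed.

Definition idx0 (n : nat) : 'I_(2 ^ n) := Ordinal (pow2_gt0 n).

Definition Ebasis {C : numClosedFieldType} {n : nat} (x : 'I_(2 ^ n)) : 'M[C]_(2 ^ n) :=
  delta_mx x x.

Definition unitary {C : numClosedFieldType} {m : nat} (g : 'M[C]_m) : Prop :=
  g *m adj g = 1%:M.

Definition clifford {C : numClosedFieldType} {n : nat} (g : 'M[C]_(2 ^ n)) : Prop :=
  unitary g /\
  forall a : label n, exists b : label n,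
    omega g (pauli a) = pauli b \/ omega g (pauli a) = - pauli b.

Definition phase_eq {C : numClosedFieldType} {m : nat} (U g : 'M[C]_m) : Prop :=
  exists c : C, `|c| = 1 /\ U = c *: g.

(* cl is a transversal of Cl_n modulo global phases, i.e. it represents
   the (finite) Clifford group Cl_n, each element exactly once *)
Definition clifford_transversal {C : numClosedFieldType} {n : nat}
  (cl : seq 'M[C]_(2 ^ n)) : Prop :=
  [/\ uniq cl,
      (forall g, g \in cl -> clifford g),
      (forall U, clifford U -> exists2 g, g \in cl & phase_eq U g) &
      (forall g h, g \in cl -> h \in cl -> phase_eq g h -> g = h)].

Definition pauli_channel {C : numClosedFieldType} {n : nat}
  (q : {ffun label n -> C}) (rho : 'M[C]_(2 ^ n)) : 'M[C]_(2 ^ n) :=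
  \sum_b q b *: (pauli b *m rho *m pauli b).

Definition prob_vec {C : numClosedFieldType} {n : nat} (q : {ffun label n -> C}) : Prop :=
  (forall b, 0 <= q b) /\ \sum_b q b = 1.

(* eigenvalue lambda_a of the Pauli channel: Lambda(sigma_a) = lambda_a sigma_a,
   hence lambda_a = (sigma_a|Lambda|sigma_a) / d *)
Definition eig {C : numClosedFieldType} {n : nat} (q : {ffun label n -> C}) (a : label n) : C :=
  hs (pauli a) (pauli_channel q) (pauli a) / (2 ^ n)%:R.

Definition zlabel {n : nat} (z : {ffun 'I_n -> bool}) : label n := [ffun i => (z i, false)].
Definition Zop {C : numClosedFieldType} {n : nat} (z : {ffun 'I_n -> bool}) : 'M[C]_(2 ^ n) :=
  pauli (zlabel z).

(* Xi_z(g) = sigma_a, i.e. g^dagger Z_z g = +- sigma_a *)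
Definition Xi_is {C : numClosedFieldType} {n : nat} (z : {ffun 'I_n -> bool})
  (g : 'M[C]_(2 ^ n)) (a : label n) : bool :=
  (adj g *m Zop z *m g == pauli a) || (adj g *m Zop z *m g == - pauli a).

(* uniform probability p(g) = 1/|Cl_n| on the transversal cl *)
Definition s_wt {C : numClosedFieldType} {n : nat} (cl : seq 'M[C]_(2 ^ n)) (a : label n) : C :=
  \sum_(z : {ffun 'I_n -> bool}) \sum_(g <- cl | Xi_is z g a) (size cl)%:R^-1.

Definition lambda_bar {C : numClosedFieldType} {n : nat} (cl : seq 'M[C]_(2 ^ n))
  (q : 'M[C]_(2 ^ n) -> {ffun label n -> C}) (a : label n) : C :=
  (s_wt cl a)^-1 *
  \sum_(z : {ffun 'I_n -> bool}) \sum_(g <- cl | Xi_is z g a)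
     (size cl)%:R^-1 * eig (q g) a.

Definition fhat {C : numClosedFieldType} {n : nat} (g : 'M[C]_(2 ^ n)) (x : 'I_(2 ^ n)) : C :=
  ((2 ^ n)%:R * hs (Ebasis x) (omega g) (Ebasis (idx0 n)) - 1) / ((2 ^ n)%:R - 1).

Definition outcome_prob {C : numClosedFieldType} {n : nat}
  (q : 'M[C]_(2 ^ n) -> {ffun label n -> C}) (g : 'M[C]_(2 ^ n)) (x : 'I_(2 ^ n)) : C :=
  hs (Ebasis x) (fun rho => omega g (pauli_channel (q g) rho)) (Ebasis (idx0 n)).

Definition expected_fhat {C : numClosedFieldType} {n : nat} (cl : seq 'M[C]_(2 ^ n))
  (q : 'M[C]_(2 ^ n) -> {ffun label n -> C}) : C :=
  \sum_(g <- cl) (size cl)%:R^-1 * \sum_(x : 'I_(2 ^ n)) outcome_prob q g x * fhat g x.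

(* Main.v *)
From Stdlib Require Import IndefiniteDescription.
Require Import Defs.
From HB Require Import structures.
From mathcomp Require Import all_boot all_order all_algebra.
From mathcomp Require Import ring.
Import Order.TTheory GRing.Theory Num.Theory.
Set Implicit Arguments. Unset Strict Implicit.
Lemma bits_inj_nat (n x y : nat) : (x < 2 ^ n)%N -> (y < 2 ^ n)%N ->
  (forall j, (j < n)%N -> odd (x %/ 2 ^ j) = odd (y %/ 2 ^ j)) -> x = y.
Proof.
elim: n x y => [|n IH] x y.
  by rewrite expn0 !ltnS !leqn0 => /eqP -> /eqP ->.
move=> hx hy hb.
have h0 := hb 0%N (ltn0Sn n); rewrite !expn0 !divn1 in h0.
have hx2 : (x %/ 2 < 2 ^ n)%N by rewrite ltn_divLR // -expnSr.
have hy2 : (y %/ 2 < 2 ^ n)%N by rewrite ltn_divLR // -expnSr.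
have e : x %/ 2 = y %/ 2.
  apply: IH => // j hj.
  by rewrite -!divnMA -expnS; apply: hb.
by rewrite -(odd_double_half x) -(odd_double_half y) h0 -!divn2 e.
Qed.


Local Open Scope ring_scope.

Definition bits (n : nat) (x : 'I_(2 ^ n)) : {ffun 'I_n -> bool} := [ffun j => bit x j].
Arguments bits {n}.

Lemma bits_inj n : injective (@bits n).
Proof.
move=> x y /ffunP h; apply: val_inj; apply: (@bits_inj_nat n _ _ (ltn_ord x) (ltn_ord y)).
move=> j hj; have := h (Ordinal hj); by rewrite !ffunE.
Qed.

Lemma bits_bij n : bijective (@bits n).
Proof.
apply: inj_card_bij; first exact: bits_inj.
by rewrite card_ffun card_bool !card_ord.
Qed.

Lemma sum_bits (R : nmodType) n (F : {ffun 'I_n -> bool} -> R) :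
  \sum_(x : 'I_(2 ^ n)) F (bits x) = \sum_v F v.
Proof.
by rewrite (reindex (@bits n)) //; apply: onW_bij; apply: bits_bij.
Qed.

Lemma bits_eq n (x y : 'I_(2 ^ n)) : (x == y) = [forall j, bit x j == bit y j].
Proof.
apply/eqP/forallP => [-> //|h]; apply: bits_inj; apply/ffunP => j; rewrite !ffunE.
exact/eqP.
Qed.

Section Tens.
Variable C : numClosedFieldType.
Variable n : nat.
Implicit Types f g : 'I_n -> bool -> bool -> C.

Definition tens f : 'M[C]_(2 ^ n) := \matrix_(x, y) \prod_(j < n) f j (bit x j) (bit y j).

Lemma pauliE (a : label n) : pauli a = tens (fun j => pauli1 (a j)).
Proof. by []. Qed.

Lemma bitE (x : 'I_(2 ^ n)) j : bit x j = bits x j.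
Proof. by rewrite ffunE. Qed.

Lemma sum_prod (F : 'I_n -> bool -> C) :
  \sum_(w : 'I_(2 ^ n)) \prod_j F j (bit w j) = \prod_j \sum_(u : bool) F j u.
Proof.
rewrite bigA_distr_bigA /= -(sum_bits (fun v => \prod_j F j (v j))).
by apply: eq_bigr => w _; apply: eq_bigr => j _; rewrite bitE.
Qed.

Lemma tens_mul f g : tens f *m tens g =
  tens (fun j r c => \sum_(u : bool) f j r u * g j u c).
Proof.
apply/matrixP => x y; rewrite !mxE -sum_prod.
by apply: eq_bigr => w _; rewrite !mxE -big_split.
Qed.

Lemma tens_tr f : \tr (tens f) = \prod_j \sum_(u : bool) f j u u.
Proof.
rewrite -sum_prod; apply: eq_bigr => w _; by rewrite mxE.
Qed.

Lemma tens_scale (k : 'I_n -> C) f :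
  tens (fun j r c => k j * f j r c) = (\prod_j k j) *: tens f.
Proof.
by apply/matrixP => x y; rewrite !mxE big_split.
Qed.

Lemma tens_adj f : adj (tens f) = tens (fun j r c => (f j c r)^*).
Proof.
by apply/matrixP => x y; rewrite !mxE rmorph_prod.
Qed.

Lemma tens_ext f g : (forall j r c, f j r c = g j r c) -> tens f = tens g.
Proof.
by move=> h; apply/matrixP => x y; rewrite !mxE; apply: eq_bigr => j _; rewrite h.
Qed.

Lemma tens_eq1 f : (forall j r c, f j r c = (r == c)%:R) -> tens f = 1%:M.
Proof.
move=> h; apply/matrixP => x y; rewrite !mxE bits_eq.
under eq_bigr do rewrite h.
case: (boolP [forall j, bit x j == bit y j]) => H.
  move/forallP: H => H.
  by rewrite big1 //; move=> j _; rewrite (eqP (H j)) eqxx.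
have [j Hj] : exists j, bit x j != bit y j.
  by apply/existsP; rewrite -negb_forall.
by rewrite (bigD1 j) //= (negbTE Hj) mul0r.
Qed.

Lemma tens_scale_mx (k : C) f g : tens f = k *: tens g -> tens f = k *: tens g.
Proof. by []. Qed.

End Tens.

Section Q.
Variable C : numClosedFieldType.

Definition kap (s t : bool * bool) : C :=
  match s, t with
  | (false,true),(true,true) => 'i
  | (true,true),(false,true) => -'i
  | (true,true),(true,false) => 'i
  | (true,false),(true,true) => -'i
  | (true,false),(false,true) => 'i
  | (false,true),(true,false) => -'i
  | _,_ => 1 end.

Definition eps (s t : bool * bool) : C :=
  if (s != (false,false)) && (t != (false,false)) && (s != t) then -1 else 1.

Definition padd1 (s t : bool * bool) := (s.1 (+) t.1, s.2 (+) t.2).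

Lemma ii : 'i * 'i = -1 :> C.
Proof. by rewrite -expr2 sqrCi. Qed.

Ltac qsimp := rewrite /= ?big_bool /= ?mulr1 ?mul1r ?mulr0 ?mul0r ?addr0 ?add0r
   ?mulrN ?mulNr ?opprK ?ii ?mulrN1 ?mulN1r ?opprK ?eqxx ?oppr0 //.

Lemma q_mul s t r c : \sum_(u : bool) pauli1 s r u * pauli1 t u c =
   kap s t * pauli1 (padd1 s t) r c :> C.
Proof.
by case: s t r c => [[] []] [[] []] [] []; qsimp; qsimp.
Qed.


Lemma q_comm s t r c : \sum_(u : bool) pauli1 s r u * pauli1 t u c =
   eps s t * \sum_(u : bool) pauli1 t r u * pauli1 s u c :> C.
Proof.
by case: s t r c => [[] []] [[] []] [] []; rewrite /eps /=; qsimp; qsimp.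
Qed.

Lemma q_sq s r c : \sum_(u : bool) pauli1 s r u * pauli1 s u c = (r == c)%:R :> C.
Proof.
by case: s r c => [[] []] [] []; qsimp; qsimp.
Qed.

Lemma q_adj s r c : (pauli1 s c r)^* = pauli1 s r c :> C.
Proof.
have h : ('i : C)^* = - 'i := conjCi C.
have h2 : (- ('i : C))^* = 'i by rewrite -h conjCK.
by case: s r c => [[] []] [] []; rewrite /= ?rmorph1 ?rmorph0 ?h ?h2 ?rmorphN ?rmorph1.
Qed.

Lemma q_tr s t : \sum_(u : bool) \sum_(v : bool) pauli1 s u v * pauli1 t v u =
  (s == t)%:R *+ 2 :> C.
Proof.
by case: s t => [[] []] [[] []]; qsimp; qsimp; rewrite ?mul0rn ?subrr ?addNr.
Qed.

Lemma q_00 s : pauli1 s false false = (~~ s.2)%:R :> C.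
Proof. by case: s => [[] []]. Qed.

Lemma kap4 s t : kap s t ^+ 4 = 1.
Proof.
have i4 : ('i : C) ^+ 4 = 1 by rewrite (exprM _ 2 2) sqrCi sqrrN expr1n.
have j4 : (- 'i : C) ^+ 4 = 1 by rewrite -mulN1r exprMn i4 mulr1 -signr_odd.
by case: s t => [[] []] [[] []]; rewrite /= ?expr1n ?i4 ?j4.
Qed.

Lemma eps2 s t : eps s t ^+ 2 = 1.
Proof. by rewrite /eps; case: ifP; rewrite ?sqrrN expr1n. Qed.

End Q.

Section P.
Variable C : numClosedFieldType.
Variable n : nat.
Implicit Types a b : label n.

Local Notation d := (2 ^ n)%N.
Local Notation P := (@pauli C n).

Definition padd a b : label n := [ffun j => padd1 (a j) (b j)].
Definition kapp a b : C := \prod_j kap C (a j) (b j).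
Definition epsp a b : C := \prod_j eps C (a j) (b j).

Lemma pauli_mul a b : P a *m P b = kapp a b *: P (padd a b).
Proof.
rewrite !pauliE tens_mul -tens_scale; apply: tens_ext => j r c.
by rewrite q_mul ffunE.
Qed.

Lemma pauli_comm a b : P a *m P b = epsp a b *: (P b *m P a).
Proof.
rewrite !pauliE !tens_mul -tens_scale; apply: tens_ext => j r c.
by rewrite q_comm.
Qed.

Lemma pauli_sq a : P a *m P a = 1%:M.
Proof.
rewrite !pauliE tens_mul; apply: tens_eq1 => j r c; exact: q_sq.
Qed.

Lemma pauli_adj a : adj (P a) = P a.
Proof.
rewrite !pauliE tens_adj; apply: tens_ext => j r c; exact: q_adj.
Qed.

Lemma pauli0 : P (label0 n) = 1%:M.
Proof.
rewrite pauliE; apply: tens_eq1 => j r c; by rewrite ffunE.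
Qed.

Lemma pauli_tr a b : \tr (P a *m P b) = (a == b)%:R * d%:R.
Proof.
rewrite !pauliE tens_mul tens_tr.
under eq_bigr do rewrite q_tr.
case: (eqVneq a b) => [->|nab].
  rewrite mul1r (eq_bigr (fun _ => 2%:R)); last by move=> j _; rewrite eqxx.
  by rewrite prodr_const card_ord natrX.
have [j hj] : exists j, a j != b j.
  apply/existsP; move: nab; apply: contraR; rewrite negb_exists => /forallP h.
  by apply/eqP/ffunP => j; apply/eqP; move: (h j); rewrite negbK.
by rewrite (bigD1 j) //= (negbTE hj) mul0rn mul0r mul0r.
Qed.

Lemma d_neq0 : (d%:R : C) != 0.
Proof. by rewrite pnatr_eq0 -lt0n expn_gt0. Qed.

Lemma pauli_uniq a b (e : C) : P a = e *: P b -> a = b.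
Proof.
move=> h; have := pauli_tr a a; rewrite eqxx mul1r {1}h -scalemxAl mxtraceZ pauli_tr.
case: (eqVneq b a) => // _; rewrite mul0r mulr0 => /esym/eqP; by rewrite (negbTE d_neq0).
Qed.

Lemma pauli_00 a : P a (idx0 n) (idx0 n) = (diag_label a)%:R.
Proof.
rewrite mxE /diag_label.
have b0 j : bit (idx0 n) j = false by rewrite /bit /= div0n.
under eq_bigr do rewrite !b0 q_00.
case: (boolP [forall i, ~~ (a i).2]) => H.
  by rewrite big1 // => j _; move/forallP: H => H; rewrite H.
have [j hj] : exists j, ~~ ~~ (a j).2 by apply/existsP; rewrite -negb_forall.
by rewrite (bigD1 j) //= (negbTE hj) mul0r.
Qed.

Lemma epsp2 a b : epsp a b ^+ 2 = 1.
Proof. by rewrite /epsp -prodrXl big1 // => j _; rewrite eps2. Qed.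

Lemma kapp4 a b : kapp a b ^+ 4 = 1.
Proof. by rewrite /kapp -prodrXl big1 // => j _; rewrite kap4. Qed.

Lemma pauli_sandwich a b : P b *m P a *m P b = epsp b a *: P a.
Proof.
by rewrite pauli_comm -scalemxAl -mulmxA pauli_sq mulmx1.
Qed.


End P.

Section Z.
Variable C : numClosedFieldType.
Variable n : nat.
Local Notation d := (2 ^ n)%N.

Definition chi (z : {ffun 'I_n -> bool}) (x : 'I_d) : C :=
  \prod_j (if z j && bit x j then -1 else 1).

Lemma prod_bits_eq (x y : 'I_d) (F : 'I_n -> bool -> bool -> C) (k : C) :
  (forall j r, F j r r = k) -> (forall j r c, r != c -> F j r c = 0) ->
  \prod_j F j (bit x j) (bit y j) = (x == y)%:R * k ^+ n.
Proof.
move=> h1 h2; rewrite bits_eq.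
case: (boolP [forall j, bit x j == bit y j]) => H.
  move/forallP: H => H; rewrite mul1r (eq_bigr (fun _ => k)).
    by rewrite prodr_const card_ord.
  by move=> j _; rewrite (eqP (H j)) h1.
have [j hj] : exists j, bit x j != bit y j by apply/existsP; rewrite -negb_forall.
by rewrite (bigD1 j) //= h2 // !mul0r.
Qed.

Lemma prod_bits_neq (x y : 'I_d) (F : 'I_n -> bool -> bool -> C) :
  x != y -> (forall j r c, r != c -> F j r c = 0) ->
  \prod_j F j (bit x j) (bit y j) = 0.
Proof.
rewrite bits_eq => H h2.
have [j hj] : exists j, bit x j != bit y j by apply/existsP; rewrite -negb_forall.
by rewrite (bigD1 j) //= h2 // !mul0r.
Qed.

Lemma ZopE z (x y : 'I_d) : (Zop z : 'M[C]_d) x y = (x == y)%:R * chi z x.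
Proof.
rewrite /Zop mxE.
case: (eqVneq x y) => [<-|nxy].
  by rewrite mul1r /chi; apply: eq_bigr => j _; rewrite ffunE /=; case: (z j); case: (bit x j).
rewrite (@prod_bits_neq x y (fun j => pauli1 (zlabel z j))) //; first by rewrite !mul0r.
by move=> j r c; rewrite ffunE /=; case: (z j); case: r; case: c.
Qed.

Lemma Zop_tr z (A : 'M[C]_d) : \tr (Zop z *m A) = \sum_x chi z x * A x x.
Proof.
rewrite /mxtrace; apply: eq_bigr => x _; rewrite mxE (bigD1 x) //= big1.
  by rewrite ZopE eqxx mul1r addr0.
by move=> y nyx; rewrite ZopE eq_sym (negbTE nyx) !mul0r.
Qed.

Lemma chi_orth (x y : 'I_d) : \sum_z chi z x * chi z y = (x == y)%:R * d%:R.
Proof.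
rewrite /chi.
under eq_bigr do rewrite -big_split /=.
rewrite -(bigA_distr_bigA (fun j (b : bool) => (if b && bit x j then -1 else 1) *
   (if b && bit y j then -1 else 1) : C)) /=.
rewrite (@prod_bits_eq x y (fun j r c => \sum_(b : bool) (if b && r then -1 else 1) *
   (if b && c then -1 else 1)) 2%:R).
- by rewrite natrX.
- by move=> j r; rewrite big_bool /=; case: r; rewrite /= ?mulN1r ?opprK ?mulr1.
- move=> j r c; rewrite big_bool /=; case: r; case: c => //= _;
  by rewrite ?mulN1r ?mulr1 ?mulrN1 ?addNr ?addrN.
Qed.

Lemma aux (k u : C) : k != 0 -> u = k^-1 * (u * k).
Proof. by move=> hk; rewrite mulrC -mulrA mulfV // mulr1. Qed.

Lemma LZZ (A B : 'M[C]_d) :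
  \sum_x A x x * B x x = (d%:R)^-1 * \sum_z \tr (Zop z *m A) * \tr (Zop z *m B).
Proof.
have e : forall z, \tr (Zop z *m A) * \tr (Zop z *m B) =
   \sum_x \sum_y (A x x * B y y) * (chi z x * chi z y).
  move=> z; rewrite !Zop_tr big_distrl /=; apply: eq_bigr => x _.
  rewrite big_distrr /=; apply: eq_bigr => y _; by rewrite mulrACA mulrC.
under [in RHS]eq_bigr do rewrite e.
rewrite exchange_big /=.
under [in RHS]eq_bigr do rewrite exchange_big /=.
under [in RHS]eq_bigr do (under eq_bigr do rewrite -big_distrr /= chi_orth).
rewrite big_distrr /=; apply: eq_bigr => x _.
rewrite (bigD1 x) //= big1 ?addr0.
  by rewrite eqxx mul1r; apply: aux; exact: d_neq0.
by move=> y nyx; rewrite eq_sym (negbTE nyx) !mul0r mulr0.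
Qed.


End Z.

Section Cl.
Variable C : numClosedFieldType.
Variable m : nat.
Implicit Types A B g h : 'M[C]_m.

Lemma hadjM A B : adj (A *m B) = adj B *m adj A.
Proof.
apply/matrixP => i j; rewrite !mxE rmorph_sum; apply: eq_bigr => k _.
by rewrite !mxE rmorphM mulrC.
Qed.

Lemma hadjK A : adj (adj A) = A.
Proof. by apply/matrixP => i j; rewrite !mxE conjCK. Qed.

Lemma hadj1 : adj (1%:M : 'M[C]_m) = 1%:M.
Proof. by apply/matrixP => i j; rewrite !mxE eq_sym; case: eqP; rewrite ?rmorph1 ?rmorph0. Qed.

Lemma hadjZ (c : C) A : adj (c *: A) = c^* *: adj A.
Proof. by apply/matrixP => i j; rewrite !mxE rmorphM. Qed.

Lemma hadjN A : adj (- A) = - adj A.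
Proof. by apply/matrixP => i j; rewrite !mxE rmorphN. Qed.

Lemma hadjD A B : adj (A + B) = adj A + adj B.
Proof. by apply/matrixP => i j; rewrite !mxE rmorphD. Qed.

Lemma unitaryV g : unitary g -> adj g *m g = 1%:M.
Proof. by move=> u; apply: mulmx1C. Qed.

Lemma omegaK g (X : 'M[C]_m) : unitary g -> adj g *m omega g X *m g = X.
Proof.
move=> u; rewrite /omega !mulmxA (unitaryV u) mul1mx -mulmxA.
by rewrite (unitaryV u) mulmx1.
Qed.

Lemma omegaK' g (X : 'M[C]_m) : unitary g -> g *m (adj g *m X *m g) *m adj g = X.
Proof.
move=> u; rewrite !mulmxA u mul1mx -mulmxA u mulmx1 //.
Qed.

Lemma unitary_mul g h : unitary g -> unitary h -> unitary (g *m h).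
Proof.
move=> ug uh; rewrite /unitary hadjM mulmxA -(mulmxA g) uh mulmx1 //.
Qed.

End Cl.

Section Cl2.
Variable C : numClosedFieldType.
Variable n : nat.
Local Notation d := (2 ^ n)%N.
Local Notation P := (@pauli C n).
Implicit Types g h : 'M[C]_d.

Definition spm (M : 'M[C]_d) (b : label n) : Prop := M = P b \/ M = - P b.

Lemma spmP M b : reflect (spm M b) ((M == P b) || (M == - P b)).
Proof.
apply: (iffP orP); first by case=> /eqP ->; [left|right].
rewrite /spm; case=> ->; rewrite eqxx; [by left | by right].
Qed.

Lemma spm_uniq M a b : spm M a -> spm M b -> a = b.
Proof.
rewrite /spm; case=> -> [] h.
- by apply: (@pauli_uniq C n a b 1); rewrite scale1r.
- by apply: (@pauli_uniq C n a b (-1)); rewrite scaleN1r.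
- by apply: (@pauli_uniq C n a b (-1)); rewrite scaleN1r -h opprK.
- by apply: (@pauli_uniq C n a b 1); rewrite scale1r; apply: oppr_inj.
Qed.

Lemma spm_conj g h M b : unitary g -> spm M b -> spm (g *m M *m h) b ->
  True.
Proof. by []. Qed.

Lemma spm_mulmx (X Y : 'M[C]_d) M b : spm M b -> spm (X *m M *m Y) b \/ True.
Proof. by right. Qed.

Lemma spm_map (X Y : 'M[C]_d) M a b :
  spm M a -> spm (X *m P a *m Y) b -> spm (X *m M *m Y) b.
Proof.
case=> -> [] h; [left|right|right|left]; rewrite // ?mulmxN ?mulNmx h ?opprK //.
Qed.

Lemma spm_sc M b : spm M b -> exists2 e : C, e ^+ 2 = 1 & M = e *: P b.
Proof.
case=> ->; [exists 1; rewrite ?expr1n ?scale1r // | exists (-1)].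
  by rewrite sqrrN expr1n.
by rewrite scaleN1r.
Qed.

Lemma sc_spm M b (e : C) : e ^+ 2 = 1 -> M = e *: P b -> spm M b.
Proof.
move/eqP; rewrite sqrf_eq1 => /orP [] /eqP -> ->; [left|right].
  by rewrite scale1r.
by rewrite scaleN1r.
Qed.

Lemma clifford_inv g : clifford g -> forall c, exists a, spm (adj g *m P c *m g) a.
Proof.
case=> u hc c.
pose f (a : label n) : label n :=
  odflt a [pick b | (omega g (P a) == P b) || (omega g (P a) == - P b)].
have fP a : spm (omega g (P a)) (f a).
  rewrite /f; case: pickP => [b /spmP //|H].
  have [b hb] := hc a; move: (H b); by move/spmP: hb => ->.
have finj : injective f.
  move=> a1 a2 e; have h1 := fP a1; have h2 := fP a2; rewrite -e in h2.
  have [e1 e1s h1'] := spm_sc h1; have [e2 e2s h2'] := spm_sc h2.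
  have q1 : P a1 = e1 *: (adj g *m P (f a1) *m g).
    by rewrite -(omegaK (P a1) u) h1' -scalemxAr -scalemxAl.
  have q2 : P a2 = e2 *: (adj g *m P (f a1) *m g).
    by rewrite -(omegaK (P a2) u) h2' -scalemxAr -scalemxAl.
  apply: (@pauli_uniq C n a1 a2 (e1 * e2)).
  by rewrite q1 q2 scalerA -mulrA -expr2 e2s mulr1.
have [finv fK Kf] := injF_bij finj.
have := fP (finv c); rewrite Kf => h; exists (finv c).
have [e es he] := spm_sc h.
have q : P (finv c) = e *: (adj g *m P c *m g).
  by rewrite -(omegaK (P (finv c)) u) he -scalemxAr -scalemxAl.
apply: (@sc_spm _ _ e es); by rewrite q scalerA -expr2 es scale1r.
Qed.

End Cl2.

Section U.
Variable C : numClosedFieldType.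
Variable n : nat.
Local Notation d := (2 ^ n)%N.
Local Notation P := (@pauli C n).
Local Notation eP := (@epsp C n).
Implicit Types a b c : label n.

Lemma eps_sym s t : eps C s t = eps C t s.
Proof. by case: s t => [[] []] [[] []]. Qed.

Lemma epsp_sym a b : eP a b = eP b a :> C.
Proof. by apply: eq_bigr => j _; rewrite eps_sym. Qed.

Lemma epsp_pm a b : (eP a b = 1 :> C) \/ eP a b = -1.
Proof.
have := epsp2 C a b; move/eqP; rewrite sqrf_eq1 => /orP [] /eqP ->; by [left|right].
Qed.

Definition r2 : C := sqrtC 2.
Lemma r2_sq : r2 ^+ 2 = 2. Proof. exact: sqrtCK. Qed.
Lemma r2_conj : r2^* = r2.
Proof. by apply: conj_Creal; apply: ger0_real; rewrite sqrtC_ge0 ler0n. Qed.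
Lemma r2_neq0 : r2 != 0.
Proof. by apply/eqP => h; have := r2_sq; rewrite h expr0n /= => /eqP; rewrite eq_sym pnatr_eq0. Qed.

Definition Umx a b : 'M[C]_d := r2^-1 *: (P a + P b).

Lemma U_herm a b : adj (Umx a b) = Umx a b.
Proof. rewrite /Umx hadjZ hadjD !pauli_adj fmorphV; congr (_^-1 *: _); exact: r2_conj. Qed.

Lemma mx_expand (A B : 'M[C]_d) : (A + B) *m (A + B) = A *m A + A *m B + B *m A + B *m B.
Proof. by rewrite mulmxDl !mulmxDr !addrA. Qed.

Lemma r2_inv2 : r2^-1 * r2^-1 = 2^-1.
Proof. by rewrite -invfM -expr2 r2_sq. Qed.

Lemma two_neq0 : (2 : C) != 0.
Proof. by rewrite pnatr_eq0. Qed.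

Lemma U_sq a b : eP a b = -1 -> Umx a b *m Umx a b = 1%:M.
Proof.
move=> e; rewrite /Umx -scalemxAl -scalemxAr scalerA r2_inv2 mx_expand !pauli_sq.
rewrite (pauli_comm C a b) e scaleN1r addrNK.
by rewrite -mulr2n -scaler_nat scalerA mulVf ?two_neq0 // scale1r.
Qed.

Lemma U_unitary a b : eP a b = -1 -> unitary (Umx a b).
Proof. by move=> e; rewrite /unitary U_herm U_sq. Qed.

Lemma U_map a b : eP a b = -1 -> adj (Umx a b) *m P a *m Umx a b = P b.
Proof.
move=> e; rewrite U_herm /Umx -!scalemxAl -!scalemxAr !scalerA r2_inv2.
rewrite mulmxDl !mulmxDr !mulmxDl pauli_sq mul1mx -mulmxA pauli_sq mulmx1.
rewrite mul1mx pauli_sandwich epsp_sym e scaleN1r.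
rewrite [P b + - P a]addrC addrACA addrN add0r.
by rewrite -mulr2n -scaler_nat scalerA mulVf ?two_neq0 // scale1r.
Qed.


Lemma one_neq0 : (1%:M : 'M[C]_d) != 0.
Proof.
apply/eqP => /matrixP /(_ (idx0 n) (idx0 n)); rewrite !mxE eqxx /= => /eqP.
by rewrite oner_eq0.
Qed.

Lemma pauli_neq0 b : P b != 0.
Proof.
apply/eqP => h; have := pauli_sq C b; rewrite h mul0mx => /esym/eqP.
by rewrite (negbTE one_neq0).
Qed.

Definition PPm (M : 'M[C]_d) := exists K : C, exists b, K ^+ 4 = 1 /\ M = K *: P b.

Lemma herm_PP M : adj M = M -> PPm M -> exists b, spm M b.
Proof.
move=> hM [K [b [K4 eM]]]; rewrite eM in hM *; exists b.
have hK : K^* = K.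
  move: hM; rewrite hadjZ pauli_adj => /eqP; rewrite -subr_eq0 -scalerBl scalemx_eq0.
  by rewrite (negbTE (pauli_neq0 b)) orbF subr_eq0 => /eqP.
have Kr : K \is Num.real by apply/CrealP.
have : (K ^+ 2) ^+ 2 == 1 by rewrite -exprM K4.
rewrite sqrf_eq1 => /orP [] /eqP h2.
  by apply: (sc_spm (e:=K)) h2 _.
by move: Kr; rewrite realEsqr h2 ler0N1.
Qed.

Lemma PP_pauli b : PPm (P b).
Proof. by exists 1, b; rewrite expr1n scale1r. Qed.

Lemma PP_N M : PPm M -> PPm (- M).
Proof.
case=> K [b [K4 ->]]; exists (- K), b; split; last by rewrite scaleNr.
by rewrite -mulN1r exprMn K4 mulr1 -signr_odd.
Qed.

Lemma PP_mul M N : PPm M -> PPm N -> PPm (M *m N).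
Proof.
case=> K [b [K4 ->]] [L [c [L4 ->]]].
exists (K * L * kapp C b c), (padd b c); split.
  by rewrite !exprMn K4 L4 kapp4 !mul1r.
by rewrite -scalemxAl -scalemxAr pauli_mul !scalerA.
Qed.

Lemma U_conj a b c : eP a b = -1 ->
  Umx a b *m P c *m Umx a b = 2^-1 *: ((eP a c + eP b c) *: P c +
     (eP c b - eP c a) *: (P a *m P b *m P c)).
Proof.
move=> e; rewrite /Umx -!scalemxAl -!scalemxAr !scalerA r2_inv2; congr (_ *: _).
rewrite mulmxDl !mulmxDr !mulmxDl !pauli_sandwich.
have h1 : P a *m P c *m P b = eP c b *: (P a *m P b *m P c).
  by rewrite -mulmxA pauli_comm -scalemxAr mulmxA.
have h2 : P b *m P c *m P a = - eP c a *: (P a *m P b *m P c).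
  rewrite -mulmxA (pauli_comm C c a) -scalemxAr mulmxA (pauli_comm C b a) -scalemxAl.
  by rewrite scalerA (epsp_sym b a) e mulrN1.
rewrite h1 h2 scaleNr !scalerDl scaleNr.
by rewrite [X in _ + X = _]addrC addrACA (addrC (- _)).
Qed.

Lemma U_clifford a b : eP a b = -1 -> clifford (Umx a b).
Proof.
move=> e; split; first exact: U_unitary.
move=> c; rewrite /omega U_herm.
have herm : adj (Umx a b *m P c *m Umx a b) = Umx a b *m P c *m Umx a b.
  by rewrite !hadjM U_herm pauli_adj mulmxA.
suff /(herm_PP herm) [b' hb'] : PPm (Umx a b *m P c *m Umx a b) by exists b'.
rewrite U_conj //.
have Q := PP_mul (PP_mul (PP_pauli a) (PP_pauli b)) (PP_pauli c).
have half (X : 'M[C]_d) : 2^-1 *: ((1 + 1) *: X) = X.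
  by rewrite scalerA -[1 + 1 : C]/(2 : C) mulVf ?two_neq0 // scale1r.
rewrite (epsp_sym c a) (epsp_sym c b).
case: (epsp_pm a c) => -> ; case: (epsp_pm b c) => ->.
- by rewrite subrr scale0r addr0 half; exact: PP_pauli.
- by rewrite addrN scale0r add0r -opprD scaleNr scalerN half; apply: PP_N.
- by rewrite addNr scale0r add0r opprK half.
- by rewrite -opprD subrr scale0r addr0 scaleNr scalerN half; apply/PP_N/PP_pauli.
Qed.

End U.

Section Conn.
Variable C : numClosedFieldType.
Variable n : nat.
Variable i0 : 'I_n.
Local Notation eP := (@epsp C n).
Implicit Types a b c : label n.

Definition X0 : label n := [ffun j => if j == i0 then (false,true) else (false,false)].

Lemma epsI s : eps C s (false,false) = 1.
Proof. by case: s => [[] []]. Qed.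

Lemma epsI' s : eps C (false,false) s = 1.
Proof. by case: s => [[] []]. Qed.

Lemma eP1 a c : (forall j, j != i0 -> c j = (false,false)) -> eP a c = eps C (a i0) (c i0).
Proof.
move=> h; rewrite /epsp (bigD1 i0) //= big1 ?mulr1 // => j hj; by rewrite h // epsI.
Qed.

Lemma eP2 a c k : k != i0 -> (forall j, j != i0 -> j != k -> c j = (false,false)) ->
  eP a c = eps C (a i0) (c i0) * eps C (a k) (c k).
Proof.
move=> hk h; rewrite /epsp (bigD1 i0) //= (bigD1 k) /=; last by rewrite hk.
rewrite big1 ?mulr1 // => j /andP [hj1 hj2]; by rewrite h // epsI.
Qed.

Definition ant (s : bool * bool) := if s == (true,false) then (false,true) else (true,false).

Lemma pconnect a : a != label0 n -> eP a X0 = -1 \/ exists c, eP a c = -1 /\ eP c X0 = -1.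
Proof.
move=> a0.
have hX : forall j, j != i0 -> X0 j = (false,false) by move=> j hj; rewrite ffunE (negbTE hj).
have X0i : X0 i0 = (false,true) by rewrite ffunE eqxx.
pose Z1 : label n := [ffun j => if j == i0 then (true,false) else (false,false)].
have hZ : forall j, j != i0 -> Z1 j = (false,false) by move=> j hj; rewrite ffunE (negbTE hj).
have Z1i : Z1 i0 = (true,false) by rewrite ffunE eqxx.
case E: (a i0) => [[] []].
- by left; rewrite eP1 // E X0i.
- by left; rewrite eP1 // E X0i.
- right; exists Z1; rewrite !eP1 // E X0i Z1i; split; by [].
- (* a i0 = I *)
  have [k hk] : exists k, a k != (false,false).
    apply/existsP; move: a0; apply: contraR; rewrite negb_exists => /forallP h.
    apply/eqP/ffunP => j; rewrite ffunE; move: (h j); by rewrite negbK => /eqP.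
  have ki : k != i0 by apply: contraNneq hk => ->; rewrite E.
  pose c : label n := [ffun j => if j == i0 then (true,false) else
                                 if j == k then ant (a k) else (false,false)].
  have hc : forall j, j != i0 -> j != k -> c j = (false,false).
    by move=> j h1 h2; rewrite ffunE (negbTE h1) (negbTE h2).
  have ci : c i0 = (true,false) by rewrite ffunE eqxx.
  have ck : c k = ant (a k) by rewrite ffunE (negbTE ki) eqxx.
  right; exists c; split.
    rewrite (eP2 _ ki hc) E ci ck epsI' mul1r.
    by move: hk; rewrite /ant; case: (a k) => [[] []].
  rewrite eP1 ?ci ?X0i //.
Qed.

End Conn.

Section Cnt.
Variable C : numClosedFieldType.
Variable n : nat.
Local Notation d := (2 ^ n)%N.
Local Notation P := (@pauli C n).
Implicit Types g h : 'M[C]_d.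

Lemma clifford_mul g h : clifford g -> clifford h -> clifford (g *m h).
Proof.
case=> ug cg [uh ch]; split; first exact: unitary_mul.
move=> a; have [b hb] := ch a; have [c hc] := cg b.
have om : omega (g *m h) (P a) = omega g (omega h (P a)) by rewrite /omega hadjM !mulmxA.
exists c; rewrite om.
case: hb => ->; first by [].
have -> : omega g (- P b) = - omega g (P b) by rewrite /omega mulmxN mulNmx.
by case: hc => ->; [right|left; rewrite opprK].
Qed.

Lemma XiP z g a : reflect (spm (adj g *m Zop z *m g) a) (Xi_is z g a).
Proof. exact: spmP. Qed.

Lemma phase_conj (c : C) : `|c| = 1 -> c^* * c = 1.
Proof. by move=> h; rewrite mulrC -normCK h expr1n. Qed.

Lemma phase_neq0 (c : C) : `|c| = 1 -> c != 0.
Proof. by move=> h; apply/eqP => e; move: h; rewrite e normr0 => /eqP; rewrite eq_sym oner_eq0. Qed.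

Lemma adjsc (k : C) (M Z : 'M[C]_d) :
  adj (k *: M) *m Z *m (k *: M) = (k^* * k) *: (adj M *m Z *m M).
Proof.
by rewrite hadjZ -scalemxAl -scalemxAr -scalemxAl (scalerA k (k^*)) mulrC.
Qed.

Lemma swt_eq (cl : seq 'M[C]_d) h a b :
  clifford_transversal cl -> clifford h -> adj h *m P a *m h = P b ->
  s_wt cl a = s_wt cl b.
Proof.
case=> ucl clcl clex cluq hh hab.
have [phi Hphi] : exists phi : 'M[C]_d -> 'M[C]_d, forall g,
    g \in cl -> phi g \in cl /\ phase_eq (g *m h) (phi g).
  apply: (functional_choice (fun g r => g \in cl -> r \in cl /\ phase_eq (g *m h) r)).
  move=> g; case: (boolP (g \in cl)) => gin; last by exists g.
  have [r rin hr] := clex _ (clifford_mul (clcl _ gin) hh).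
  by exists r.
have uh := hh.1; have uhV := unitaryV uh.
have phinj : {in cl &, injective phi}.
  move=> g1 g2 i1 i2 e.
  have [_ [c1 [n1 e1]]] := Hphi _ i1; have [_ [c2 [n2 e2]]] := Hphi _ i2.
  apply: cluq => //; exists (c1 / c2); split.
    by rewrite normf_div n1 n2 divr1.
  have q1 : g1 = c1 *: (phi g1 *m adj h) by rewrite scalemxAl -e1 -mulmxA uh mulmx1.
  have q2 : g2 = c2 *: (phi g2 *m adj h) by rewrite scalemxAl -e2 -mulmxA uh mulmx1.
  by rewrite q1 q2 e scalerA mulrVK // unitfE phase_neq0.
have hperm : perm_eq (map phi cl) cl.
  apply: uniq_perm; first by rewrite map_inj_in_uniq.
    exact: ucl.
  have sub : {subset map phi cl <= cl} by move=> r /mapP [g gin ->]; case: (Hphi _ gin).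
  have um : uniq (map phi cl) by rewrite map_inj_in_uniq.
  have hs : (size cl <= size (map phi cl))%N by rewrite size_map.
  by case: (uniq_min_size um sub hs).
have key : forall z g, g \in cl -> Xi_is z (phi g) b = Xi_is z g a.
  move=> z g gin; have [_ [c [nc ec]]] := Hphi _ gin.
  have ec' : phi g = c^-1 *: (g *m h).
    by rewrite ec (scalerA (c^-1) c (phi g)) mulVf ?scale1r // phase_neq0.
  have E : adj (phi g) *m Zop z *m phi g = adj h *m (adj g *m Zop z *m g) *m h.
    have kc : (c^-1)^* * c^-1 = 1 by apply: phase_conj; rewrite normfV nc invr1.
    by rewrite ec' adjsc kc scale1r hadjM !mulmxA.
  apply/idP/idP => /XiP H; apply/XiP.
    rewrite E in H.
    have H2 : spm (h *m P b *m adj h) a by left; rewrite -hab omegaK'.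
    by move: (spm_map H H2); rewrite omegaK'.
  by rewrite E; apply: (spm_map H); left.
rewrite /s_wt; apply: eq_bigr => z _; symmetry.
rewrite -(perm_big _ hperm) big_map big_seq_cond [RHS]big_seq_cond.
by apply: eq_bigl => g; case: (boolP (g \in cl)) => //= gin; rewrite key.
Qed.
End Cnt.

Section Swt.
Variable C : numClosedFieldType.
Variable n : nat.
Local Notation d := (2 ^ n)%N.
Local Notation P := (@pauli C n).
Variable cl : seq 'M[C]_d.
Hypothesis Hcl : clifford_transversal cl.

Lemma clifford1 : clifford (1%:M : 'M[C]_d).
Proof.
split; first by rewrite /unitary hadj1 mulmx1.
by move=> a; exists a; left; rewrite /omega mul1mx hadj1 mulmx1.
Qed.

Lemma cl_clifford g : g \in cl -> clifford g.
Proof. by case: Hcl => _ h _ _; apply: h. Qed.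

Lemma size_cl : (0 < size cl)%N.
Proof.
case: Hcl => _ _ h _; have [g gin _] := h _ clifford1.
by case: cl gin.
Qed.

Lemma size_cl_neq0 : ((size cl)%:R : C) != 0.
Proof. by rewrite pnatr_eq0 -lt0n size_cl. Qed.

Lemma Xi_ex (z : {ffun 'I_n -> bool}) (g : 'M[C]_d) : g \in cl -> exists a, Xi_is z g a.
Proof.
move=> gin; have [a ha] := clifford_inv (cl_clifford gin) (zlabel z).
by exists a; apply/XiP.
Qed.

Lemma Xi_un z (g : 'M[C]_d) (a b : label n) : Xi_is z g a -> Xi_is z g b -> a = b.
Proof. by move=> /XiP h1 /XiP h2; apply: spm_uniq h1 h2. Qed.

Lemma sum_Xi z (g : 'M[C]_d) (F : label n -> C) a : Xi_is z g a ->
  \sum_(b | Xi_is z g b) F b = F a.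
Proof.
move=> ha; rewrite (bigD1 a) //= big1 ?addr0 // => b /andP [hb nba].
by move: nba; rewrite (Xi_un hb ha) eqxx.
Qed.

Lemma sum_const_seq (T : Type) (s : seq T) (k : C) : \sum_(x <- s) k = k *+ size s.
Proof. by elim: s => [|x s IH]; rewrite ?big_nil ?big_cons ?IH ?mulrS. Qed.

Lemma invmuln (k : nat) : (k%:R : C) != 0 -> (k%:R)^-1 *+ k = 1 :> C.
Proof. by move=> h; rewrite -(mulr_natr ((k%:R : C)^-1) k) mulVf. Qed.

Lemma sum_cl_inv : \sum_(g <- cl) (size cl)%:R^-1 = 1 :> C.
Proof. by rewrite sum_const_seq invmuln // size_cl_neq0. Qed.

Lemma sum_swt : \sum_a s_wt cl a = d%:R.
Proof.
rewrite /s_wt exchange_big /=.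
rewrite (eq_bigr (fun _ => 1)); last first.
  move=> z _; under eq_bigr do rewrite big_mkcond /=.
  rewrite exchange_big /= -[RHS]sum_cl_inv big_seq [RHS]big_seq.
  apply: eq_bigr => g gin; have [a ha] := Xi_ex z gin.
  by rewrite -big_mkcond /= (sum_Xi (fun _ => (size cl)%:R^-1) ha).
by rewrite sumr_const card_ffun card_bool card_ord natrX.
Qed.


Definition z0 : {ffun 'I_n -> bool} := [ffun => false].

Lemma Xi0 z (g : 'M[C]_d) : g \in cl -> Xi_is z g (label0 n) = (z == z0).
Proof.
move=> gin; have u := (cl_clifford gin).1.
have Zl : forall z, Zop z = P (zlabel z) by [].
apply/XiP/eqP => [H|->].
  have H2 : spm (g *m P (label0 n) *m adj g) (label0 n).
    by left; rewrite pauli0 mulmx1 u.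
  have := spm_map H H2; rewrite omegaK' // => H3.
  have H4 : spm (Zop z : 'M[C]_d) (zlabel z) by left.
  have e := spm_uniq H4 H3.
  apply/ffunP => j; move/ffunP: e => /(_ j); rewrite !ffunE; case.
  by [].
have -> : (Zop z0 : 'M[C]_d) = 1%:M.
  by rewrite Zl -(pauli0 C n); congr pauli; apply/ffunP => j; rewrite !ffunE.
by left; rewrite mulmx1 unitaryV // pauli0.
Qed.

Lemma swt0 : s_wt cl (label0 n) = 1.
Proof.
rewrite /s_wt (bigD1 z0) //= [X in _ + X]big1 ?addr0.
  rewrite big_seq_cond -[RHS]sum_cl_inv [RHS]big_seq; apply: eq_bigl => g.
  by case: (boolP (g \in cl)) => //= gin; rewrite Xi0 // eqxx.
move=> z nz; rewrite big_seq_cond big1 // => g /andP [gin].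
by rewrite Xi0 // (negbTE nz).
Qed.


Variable i0 : 'I_n.

Lemma swtX a : a != label0 n -> s_wt cl a = s_wt cl (X0 i0).
Proof.
move=> a0; case: (pconnect C i0 a0) => [e | [c [e1 e2]]].
  exact: swt_eq Hcl (U_clifford e) (U_map e).
rewrite (swt_eq Hcl (U_clifford e1) (U_map e1)).
exact: swt_eq Hcl (U_clifford e2) (U_map e2).
Qed.

Lemma dm1_neq0 : (d%:R - 1 : C) != 0.
Proof.
rewrite subr_eq0; apply/negP => /eqP h.
have : (d%:R : C) == 1%:R by rewrite h.
have n0 : (0 < n)%N by case: (n) i0 => [[]|].
have : (2 ^ 0 < 2 ^ n)%N by rewrite ltn_exp2l.
by rewrite eqr_nat expn0 => /gtn_eqF ->.
Qed.

Lemma dp1_neq0 : (d%:R + 1 : C) != 0.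
Proof. by rewrite natr1 pnatr_eq0. Qed.

Lemma card_label : #|label n| = (d * d)%N.
Proof. by rewrite card_ffun card_prod card_bool card_ord -expnMn. Qed.

Lemma swt_val a : a != label0 n -> s_wt cl a = (d%:R + 1)^-1.
Proof.
move=> a0; rewrite swtX //.
set s := s_wt cl (X0 i0).
have h := sum_swt; rewrite (bigD1 (label0 n)) //= swt0 in h.
rewrite (eq_bigr (fun _ => s)) in h; last by move=> b b0; rewrite swtX.
rewrite sumr_const cardC1 card_label in h.
have h2 : s * ((d%:R - 1) * (d%:R + 1)) = (d%:R - 1) * 1.
  rewrite mulr1 -subr_sqr expr1n -natrX -mulnn.
  have dd : (0 < d * d)%N by rewrite muln_gt0 expn_gt0.
  rewrite -(prednK dd) -natr1 addrK mulr_natr.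
  by rewrite -h addrAC subrr add0r.
have h3 : s * (d%:R + 1) = 1 by apply: (mulfI dm1_neq0); rewrite mulrCA h2.
by apply: (mulIf dp1_neq0); rewrite h3 mulVf // dp1_neq0.
Qed.

End Swt.

Section PerG.
Variable C : numClosedFieldType.
Variable n : nat.
Local Notation d := (2 ^ n)%N.
Local Notation P := (@pauli C n).
Local Notation eP := (@epsp C n).
Implicit Types (a b : label n) (M : 'M[C]_d).

Lemma tr_delta M (i : 'I_d) : \tr (M *m delta_mx i i) = M i i.
Proof.
rewrite /mxtrace (bigD1 i) //= big1 ?addr0.
  rewrite mxE (bigD1 i) //= big1 ?addr0; first by rewrite mxE !eqxx mulr1.
  by move=> k nk; rewrite mxE (negbTE nk) /= mulr0.
move=> j nj; rewrite mxE big1 // => k _; by rewrite mxE (negbTE nj) andbF mulr0.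
Qed.

Lemma adj_delta (i : 'I_d) : adj (delta_mx i i : 'M[C]_d) = delta_mx i i.
Proof.
apply/matrixP => x y; rewrite !mxE; by case: (x == i); case: (y == i); rewrite /= ?rmorph1 ?rmorph0.
Qed.

Lemma hs_E M (x : 'I_d) (f : 'M[C]_d -> 'M[C]_d) :
  hs (Ebasis x) f M = f M x x.
Proof. by rewrite /hs /Ebasis adj_delta mxtrace_mulC tr_delta. Qed.

Lemma lam_tr (Q : {ffun label n -> C}) a M :
  \tr (P a *m pauli_channel Q M) = \sum_b Q b * eP b a * \tr (P a *m M).
Proof.
rewrite /pauli_channel mulmx_sumr raddf_sum /=; apply: eq_bigr => b _.
rewrite -scalemxAr mxtraceZ -mulrA; congr (_ * _).
rewrite !mulmxA mxtrace_mulC !mulmxA pauli_sandwich -scalemxAl mxtraceZ //.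
Qed.

Lemma eigE (Q : {ffun label n -> C}) a : eig Q a = \sum_b Q b * eP b a.
Proof.
rewrite /eig /hs pauli_adj lam_tr pauli_tr eqxx mul1r -big_distrl /=.
by rewrite mulfK // d_neq0.
Qed.

Lemma trZ g z M e a : adj g *m Zop z *m g = e *: P a ->
  \tr (Zop z *m omega g M) = e * \tr (P a *m M).
Proof.
move=> h; rewrite /omega !mulmxA mxtrace_mulC !mulmxA h -scalemxAl mxtraceZ //.
Qed.


Definition E0 : 'M[C]_d := Ebasis (idx0 n).

Lemma perz g z (Q : {ffun label n -> C}) e a : unitary g -> e ^+ 2 = 1 ->
  adj g *m Zop z *m g = e *: P a ->
  \tr (Zop z *m omega g (pauli_channel Q E0)) * \tr (Zop z *m omega g E0) =
  (diag_label a)%:R * eig Q a.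
Proof.
move=> u e2 h; rewrite !(trZ _ h) lam_tr eigE /E0 /Ebasis tr_delta pauli_00.
rewrite -big_distrl /= mulrACA -expr2 e2 mul1r -mulrA -natrM mulnb andbb mulrC //.
Qed.

Lemma trB g : unitary g -> \tr (omega g E0) = 1.
Proof.
move=> u; rewrite /omega mxtrace_mulC mulmxA unitaryV // mul1mx /E0 /Ebasis.
by rewrite -[delta_mx _ _]mul1mx tr_delta mxE eqxx.
Qed.

End PerG.

Section Main.
Variable C : numClosedFieldType.
Variable n : nat.
Local Notation d := (2 ^ n)%N.
Local Notation P := (@pauli C n).
Variable cl : seq 'M[C]_d.
Hypothesis Hcl : clifford_transversal cl.
Variable q : 'M[C]_d -> {ffun label n -> C}.

Lemma Zop0 : (Zop (z0 n) : 'M[C]_d) = 1%:M.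
Proof.
by rewrite /Zop -(pauli0 C n); congr pauli; apply/ffunP => j; rewrite !ffunE.
Qed.

Definition Dp (a : label n) := diag_label a && (a != label0 n).

Lemma perg g : g \in cl ->
  \sum_x outcome_prob q g x * fhat g x = (d%:R - 1)^-1 *
  \sum_z \sum_(a | Dp a) (if Xi_is z g a then eig (q g) a else 0).
Proof.
move=> gin; have u := (cl_clifford Hcl gin).1.
set A := omega g (pauli_channel (q g) (E0 C n)).
set B := omega g (E0 C n).
have e1 : forall x, outcome_prob q g x * fhat g x =
   (d%:R - 1)^-1 * (d%:R * (A x x * B x x) - A x x).
  move=> x; rewrite /outcome_prob /fhat !hs_E -/A -/B.
  ring.
under eq_bigr do rewrite e1.
rewrite -big_distrr /=; congr (_ * _).
rewrite sumrB -big_distrr /= LZZ mulrA mulfV ?d_neq0 // mul1r.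
have trA : \sum_x A x x = \tr (Zop (z0 n) *m A) * \tr (Zop (z0 n) *m B).
  by rewrite Zop0 !mul1mx trB // mulr1.
rewrite trA (bigD1 (z0 n)) //= addrC addrK.
rewrite [RHS](bigD1 (z0 n)) //= [X in _ = X + _]big1 ?add0r; last first.
  move=> a /andP [_ a0]; have := Xi0 Hcl (z0 n) gin; rewrite eqxx.
  case: ifP => // h1 h2; by rewrite (Xi_un h1 h2) eqxx in a0.
apply: eq_bigr => z zn.
have [a ha] := Xi_ex Hcl z gin.
have a0 : a != label0 n.
  by apply: contraNneq zn => e; rewrite -(Xi0 Hcl z gin) -e.
have := ha; move/XiP => hs; have [e e2 he] := spm_sc hs.
rewrite (perz _ u e2 he) big_mkcond /= (bigD1 a) //= big1 ?addr0; last first.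
  move=> b nb; case: ifP => // _; case: ifP => // hb.
  by rewrite (Xi_un hb ha) eqxx in nb.
by rewrite ha /Dp a0 andbT; case: (diag_label a); rewrite ?mul1r ?mul0r.
Qed.

Lemma cancel3 (x y S : C) : x != 0 -> x^-1 * (y * (x * S)) = y * S.
Proof. by move=> hx; rewrite mulrCA mulKf. Qed.

Lemma main_eq (i0 : 'I_n) :
  expected_fhat cl q =
  ((2 ^ n)%:R + 1)^-1 *
  (((2 ^ n)%:R - 1)^-1 *
   \sum_(a : label n | diag_label a && (a != label0 n)) lambda_bar cl q a).
Proof.
rewrite /expected_fhat big_seq.
under eq_bigr => g gin do rewrite perg //.
have -> : \sum_(a : label n | diag_label a && (a != label0 n)) lambda_bar cl q a =
   (d%:R + 1) * \sum_(a | Dp a) \sum_z \sum_(g <- cl | Xi_is z g a)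
       (size cl)%:R^-1 * eig (q g) a.
  rewrite big_distrr /=; apply: eq_bigr => a /andP [_ a0].
  by rewrite /lambda_bar (swt_val Hcl i0 a0) invrK.
rewrite (cancel3 _ _ (@dp1_neq0 C n)) -big_seq.
under eq_bigr do rewrite mulrCA.
rewrite -big_distrr /=; congr (_ * _).
under [RHS]eq_bigr do (under eq_bigr do rewrite big_mkcond /=).
under [RHS]eq_bigr do rewrite exchange_big /=.
rewrite exchange_big /=; apply: eq_bigr => g _.
rewrite exchange_big big_distrr /=; apply: eq_bigr => z _.
rewrite big_distrr /=; apply: eq_bigr => a _.
by case: ifP; rewrite ?mulr0.
Qed.

End Main.

Unset Implicit Arguments.

Theorem lemma7 (C : numClosedFieldType) (n : nat) (cl : seq 'M[C]_(2 ^ n))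
  (q : 'M[C]_(2 ^ n) -> {ffun label n -> C}) :
  (0 < n)%N ->
  clifford_transversal cl ->
  (forall g, g \in cl -> prob_vec (q g)) ->
  expected_fhat cl q =
  ((2 ^ n)%:R + 1)^-1 *
  (((2 ^ n)%:R - 1)^-1 *
   \sum_(a : label n | diag_label a && (a != label0 n)) lambda_bar cl q a).
Proof.
move=> hn Hcl _.
exact: (main_eq Hcl q (Ordinal hn)).
Qed.
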